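(* Let $B$ be a soluble skew left brace and let $r_B\colon B\times B\to B\times B$, $r_B(a,b)=(\lambda_a(b),\lambda_a(b)^{-1}ab)$, be its associated solution of the Yang–Baxter equation. Then $(B,r_B)$ is uniformly multidecomposable.
   Context: A skew left brace (brace) is a set $B$ with two group structures $(B,+)$ and $(B,\cdot)$ (product by juxtaposition) such that $a(b+c)=ab-a+ac$; common identity $0$; $\lambda_a(b)=-a+ab$. An ideal of $B$ is a subset that is a normal subgroup of $(B,+)$ and of $(B,\cdot)$ and is invariant under all $\lambda_b$. For ideals $I,J$, $[I,J]$ is the smallest ideal containing $[I,J]_+$, $[I,J]_\cdot$ and all $ij-(i+j)$ ($i\in I,j\in J$). $B$ is abelian if $[B,B]=0$ (i.e. $ab=a+b=b+a$ for all $a,b$). $B$ is soluble if there is a chain $B=I_0\supseteq I_1\supseteq\cdots\supseteq I_n=0$ with each $I_i$ an ideal of the brace $I_{i-1}$ and $I_{i-1}/I_i$ abelian. A solution $(X,r)$ of the YBE is a set $X$ with a bijection $r:X\times X\to X\times X$ satisfying $r_{12}r_{23}r_{12}=r_{23}r_{12}r_{23}$ ($r_{12}=r\times\mathrm{id}$, $r_{23}=\mathrm{id}\times r$), both of whose components are bijective (non-degenerate). A partition $\mathcal P$ of a set is uniform if all its blocks have the same cardinality. For a partition $\mathcal P=\{X_i\}_{i\in I}$ of $X$, $(X,r)$ is (uniformly) $\mathcal P$-decomposable if ($\mathcal P$ is uniform and) $r(X_i\times X_j)=X_j\times X_i$ for all $i,j$. $(X,r)$ is (uniformly) multidecomposable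 if there is a chain $X=X_0\supseteq X_1\supseteq\cdots\supseteq X_n$ with $|X_n|=1$ such that for each $0\le i\le n-1$ there is a (uniform) partition $\mathcal P_i$ of $X_i$ with $X_{i+1}\in\mathcal P_i$ and $(X_i,r|_{X_i\times X_i})$ (uniformly) $\mathcal P_i$-decomposable. *)

(* Defs.v *)
(* skew braces may be infinite, so we use an abstract carrier
   type with explicit operations and axioms, and subsets as predicates. *)
Set Implicit Arguments.

Record skew_brace := SkewBrace {
  carrier :> Type;
  add : carrier -> carrier -> carrier;
  opp : carrier -> carrier;
  zero : carrier;
  mul : carrier -> carrier -> carrier;
  inv : carrier -> carrier;
  addA : forall a b c, add a (add b c) = add (add a b) c;
  add0l : forall a, add zero a = a;
  add0r : forall a, add a zero = a;
  addNl : forall a, add (opp a) a = zero;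
  addNr : forall a, add a (opp a) = zero;
  mulA : forall a b c, mul a (mul b c) = mul (mul a b) c;
  mul0l : forall a, mul zero a = a;
  mul0r : forall a, mul a zero = a;
  mulVl : forall a, mul (inv a) a = zero;
  mulVr : forall a, mul a (inv a) = zero;
  brace_law : forall a b c,
    mul a (add b c) = add (mul a b) (add (opp a) (mul a c))
}.

Arguments add {s}. Arguments opp {s}. Arguments zero {s}.
Arguments mul {s}. Arguments inv {s}.

Section BraceDefs.
Variable B : skew_brace.

Definition lambda (a b : B) : B := add (opp a) (mul a b).

Definition ideal_of (J I : B -> Prop) : Prop :=
  (forall x, I x -> J x) /\
  I zero /\
  (forall x y, I x -> I y -> I (add x y)) /\
  (forall x, I x -> I (opp x)) /\
  (forall j x, J j -> I x -> I (add (add j x) (opp j))) /\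
  (forall x y, I x -> I y -> I (mul x y)) /\
  (forall x, I x -> I (inv x)) /\
  (forall j x, J j -> I x -> I (mul (mul j x) (inv j))) /\
  (forall j x, J j -> I x -> I (lambda j x)).

(** The quotient brace J/I is abelian: in J/I (cosets x + I) we have
    ab = a + b = b + a, i.e. for a b in J the elements ab, a+b, b+a
    lie in the same coset of I. *)
Definition quotient_abelian (J I : B -> Prop) : Prop :=
  forall a b, J a -> J b ->
    I (add (opp (add a b)) (add b a)) /\
    I (add (opp (add a b)) (mul a b)).

Definition soluble : Prop :=
  exists (n : nat) (I : nat -> B -> Prop),
    (forall x, I 0 x) /\
    (forall x, I n x <-> x = zero) /\
    (forall i, i < n -> ideal_of (I i) (I (S i)) /\
                        quotient_abelian (I i) (I (S i))).

Definition r_brace (p : B * B) : B * B :=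
  let (a, b) := p in
  (lambda a b, mul (inv (lambda a b)) (mul a b)).

End BraceDefs.

Section Decomp.
Variable X : Type.

Definition bijective_fun (A C : Type) (f : A -> C) : Prop :=
  exists g : C -> A, (forall x, g (f x) = x) /\ (forall y, f (g y) = y).

Definition equipotent (A C : X -> Prop) : Prop :=
  exists f : {x | A x} -> {x | C x}, bijective_fun f.

Definition is_partition (Y : X -> Prop) (Idx : Type) (P : Idx -> X -> Prop) :
  Prop :=
  (forall k, exists x, P k x) /\
  (forall k x, P k x -> Y x) /\
  (forall x, Y x -> exists k, P k x) /\
  (forall k l x, P k x -> P l x -> k = l).

Definition uniform (Idx : Type) (P : Idx -> X -> Prop) : Prop :=
  forall k l, equipotent (P k) (P l).

Definition P_decomposable (r : X * X -> X * X) (Idx : Type)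
  (P : Idx -> X -> Prop) : Prop :=
  forall k l (q : X * X),
    (exists a b, P k a /\ P l b /\ r (a, b) = q) <-> (P l (fst q) /\ P k (snd q)).

Definition uniformly_multidecomposable (r : X * X -> X * X) : Prop :=
  exists (n : nat) (Xs : nat -> X -> Prop),
    (forall x, Xs 0 x) /\
    (forall i, i < n -> forall x, Xs (S i) x -> Xs i x) /\
    (exists x0, forall x, Xs n x <-> x = x0) /\
    (forall i, i < n ->
       exists (Idx : Type) (P : Idx -> X -> Prop),
         is_partition (Xs i) P /\ uniform P /\
         (exists k, forall x, P k x <-> Xs (S i) x) /\
         P_decomposable r P).

End Decomp.

(* Main.v *)
Require Import Defs.
From Stdlib Require Import ProofIrrelevance FunctionalExtensionality PropExtensionality Lia.
Set Implicit Arguments.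
Unset Strict Implicit.
Arguments ideal_of {B} J I. Arguments quotient_abelian {B} J I. Arguments lambda {B} a b. Arguments r_brace {B} p.
Arguments addA {s}. Arguments add0l {s}. Arguments add0r {s}. Arguments addNl {s}. Arguments addNr {s}. Arguments mulA {s}. Arguments mul0l {s}. Arguments mul0r {s}. Arguments mulVl {s}. Arguments mulVr {s}. Arguments brace_law {s}.

Lemma g_oppK (B : skew_brace) (x : B) : opp (opp x) = x.
Proof.
  rewrite <- (add0r (opp (opp x))). rewrite <- (addNl x).
  rewrite addA. rewrite addNl. apply add0l.
Qed.

Lemma g_addKl (B : skew_brace) (x y : B) : add (opp x) (add x y) = y.
Proof. rewrite addA, addNl. apply add0l. Qed.

Lemma g_addKl' (B : skew_brace) (x y : B) : add x (add (opp x) y) = y.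
Proof. rewrite addA, addNr. apply add0l. Qed.

Lemma g_opp_add (B : skew_brace) (x y : B) : opp (add x y) = add (opp y) (opp x).
Proof.
  assert (H : add (add x y) (add (opp y) (opp x)) = zero).
  { rewrite <- addA. rewrite g_addKl'. apply addNr. }
  rewrite <- (add0r (opp (add x y))). rewrite <- H.
  rewrite addA, addNl. apply add0l.
Qed.

Lemma g_opp0 (B : skew_brace) : opp (@zero B) = zero.
Proof. rewrite <- (add0r (opp zero)). apply addNl. Qed.

Lemma g_mulKl (B : skew_brace) (x y : B) : mul (inv x) (mul x y) = y.
Proof. rewrite mulA, mulVl. apply mul0l. Qed.

Lemma g_mulKl' (B : skew_brace) (x y : B) : mul x (mul (inv x) y) = y.
Proof. rewrite mulA, mulVr. apply mul0l. Qed.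

Definition closedJ (B : skew_brace) (J : B -> Prop) : Prop :=
  J zero /\ (forall x y, J x -> J y -> J (add x y)) /\ (forall x, J x -> J (opp x)) /\
  (forall x y, J x -> J y -> J (mul x y)) /\ (forall x, J x -> J (inv x)).

Definition level (B : skew_brace) (J I : B -> Prop) : Prop :=
  closedJ J /\ ideal_of J I /\ quotient_abelian J I.

Definition EE (B : skew_brace) (I : B -> Prop) (x y : B) := I (add (opp x) y).

Section Core.
End Core.

Lemma E_trans (B : skew_brace) (J I : B -> Prop) (L : level J I) x y z :
  EE I x y -> EE I y z -> EE I x z.
Proof.
  destruct L as [_ [[_ [_ [Hadd _]]] _]]. unfold EE. intros H1 H2.
  pose proof (Hadd _ _ H1 H2) as H. rewrite <- addA, g_addKl' in H. exact H.
Qed.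

Lemma E_sym (B : skew_brace) (J I : B -> Prop) (L : level J I) x y :
  EE I x y -> EE I y x.
Proof.
  destruct L as [_ [[_ [_ [_ [Hopp _]]]] _]]. unfold EE. intros H1.
  pose proof (Hopp _ H1) as H. rewrite g_opp_add, g_oppK in H. exact H.
Qed.

Lemma E_left (B : skew_brace) (I : B -> Prop) x y z :
  EE I x y -> EE I (add z x) (add z y).
Proof.
  unfold EE. rewrite g_opp_add, <- addA, g_addKl. auto.
Qed.

Lemma E_right (B : skew_brace) (J I : B -> Prop) (L : level J I) x y z :
  J z -> EE I x y -> EE I (add x z) (add y z).
Proof.
  destruct L as [[_ [_ [HJopp _]]] [[_ [_ [_ [_ [Hconj _]]]]] _]]. unfold EE. intros Jz H1.
  pose proof (Hconj _ _ (HJopp _ Jz) H1) as H. rewrite g_oppK in H.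
  rewrite g_opp_add. rewrite !addA in H |- *. exact H.
Qed.

Lemma E_lam (B : skew_brace) (J I : B -> Prop) (L : level J I) a' b' :
  J a' -> J b' -> EE I b' (lambda a' b').
Proof.
  intros Ja Jb. pose proof L as [_ [_ QA]].
  destruct (QA a' b' Ja Jb) as [_ H].
  pose proof (E_left (opp a') H) as H'. rewrite g_addKl in H'. exact H'.
Qed.

Definition coset (B : skew_brace) (J I : B -> Prop) (a : B) : B -> Prop :=
  fun x => J x /\ I (add (opp a) x).

Lemma forward (B : skew_brace) (J I : B -> Prop) (L : level J I) a b a' b' :
  J a' -> J b' -> EE I a a' -> EE I b b' ->
  EE I b (lambda a' b') /\ EE I a (mul (inv (lambda a' b')) (mul a' b')).
Proof.
  intros Ja Jb Ha Hb.
  pose proof L as [[_ [HJadd [HJopp [HJmul HJinv]]]] [[_ [_ [_ [_ [Hconj _]]]]] QA]].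
  split.
  - eapply E_trans; [exact L | exact Hb | apply (E_lam L); assumption].
  - set (u := lambda a' b'). set (v := mul (inv u) (mul a' b')).
    assert (Ju : J u) by (unfold u, lambda; auto).
    assert (Jv : J v) by (unfold v; auto).
    destruct (QA u v Ju Jv) as [_ H1].
    assert (Huv : mul u v = mul a' b') by (unfold v; apply g_mulKl').
    rewrite Huv in H1.
    destruct (QA a' b' Ja Jb) as [Hc Hm].
    assert (H2 : EE I (add u v) (add b' a')).
    { eapply E_trans; [exact L | exact H1 |].
      eapply E_trans; [exact L | apply (E_sym L); exact Hm | exact Hc]. }
    pose proof (E_left (opp u) H2) as H3. rewrite g_addKl in H3.
    assert (H4 : EE I (add (opp u) (add b' a')) a').
    { unfold EE. pose proof (E_lam L Ja Jb) as Hl. fold u in Hl. unfold EE in Hl.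
      pose proof (Hconj _ _ (HJopp _ Ja) Hl) as H. rewrite g_oppK in H.
      rewrite !g_opp_add, g_oppK. repeat rewrite addA in H. repeat rewrite addA. exact H. }
    eapply E_trans; [exact L | exact Ha |].
    apply (E_sym L). eapply E_trans; [exact L | exact H3 | exact H4].
Qed.

Lemma decomp_cosets (B : skew_brace) (J I : B -> Prop) (L : level J I) a b (q : B * B) :
  (exists a' b', coset J I a a' /\ coset J I b b' /\ r_brace (a', b') = q) <->
  (coset J I b (fst q) /\ coset J I a (snd q)).
Proof.
  pose proof L as [[_ [HJadd [HJopp [HJmul HJinv]]]] [_ QA]].
  unfold coset. split.
  - intros [a' [b' [[Ja Ha] [[Jb Hb] Hq]]]]. subst q. simpl.
    destruct (forward L Ja Jb Ha Hb) as [H1 H2].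
    unfold lambda in *. repeat split; auto.
  - destruct q as [c d]. simpl. intros [[Jc Hc] [Jd Hd]].
    set (a' := add (mul c d) (opp c)). set (b' := mul (inv a') (mul c d)).
    assert (Ja : J a') by (unfold a'; auto).
    assert (Jb : J b') by (unfold b'; auto).
    assert (Hl : lambda a' b' = c).
    { unfold lambda, b'. rewrite g_mulKl'. unfold a'.
      rewrite g_opp_add, g_oppK, <- addA, addNl. apply add0r. }
    exists a', b'. split; [|split].
    + split; [exact Ja|].
      destruct (QA c d Jc Jd) as [Hcm Hm].
      assert (H1 : EE I (mul c d) (add d c)).
      { eapply E_trans; [exact L | apply (E_sym L); exact Hm | exact Hcm]. }
      pose proof (E_right L (HJopp _ Jc) H1) as H2.
      rewrite <- addA, addNr, add0r in H2. fold a' in H2.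
      eapply E_trans; [exact L | exact Hd | apply (E_sym L); exact H2].
    + split; [exact Jb|].
      pose proof (E_lam L Ja Jb) as H. rewrite Hl in H.
      eapply E_trans; [exact L | exact Hc | apply (E_sym L); exact H].
    + unfold r_brace. rewrite Hl. f_equal.
      unfold b'. rewrite g_mulKl'. apply g_mulKl.
Qed.

Lemma coset_map (B : skew_brace) (J I : B -> Prop) (L : level J I) a b x :
  J a -> J b -> coset J I a x -> coset J I b (add b (add (opp a) x)).
Proof.
  intros Ja Jb [Jx Hx].
  pose proof L as [[_ [HJadd [HJopp _]]] _].
  split; [auto|]. rewrite g_addKl. exact Hx.
Qed.

Lemma equip_coset (B : skew_brace) (J I : B -> Prop) (L : level J I) a b :
  J a -> J b -> equipotent (coset J I a) (coset J I b).
Proof.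
  intros Ja Jb.
  exists (fun s => exist _ (add b (add (opp a) (proj1_sig s))) (coset_map L Ja Jb (proj2_sig s))).
  exists (fun s => exist _ (add a (add (opp b) (proj1_sig s))) (coset_map L Jb Ja (proj2_sig s))).
  split.
  - intros [x Hx]. simpl. apply subset_eq_compat. rewrite g_addKl. apply g_addKl'.
  - intros [x Hx]. simpl. apply subset_eq_compat. rewrite g_addKl. apply g_addKl'.
Qed.

Definition Idx (B : skew_brace) (J I : B -> Prop) :=
  {S : B -> Prop | exists a, J a /\ S = coset J I a}.

Lemma level_step (B : skew_brace) (J I : B -> Prop) (L : level J I) :
  exists (Ix : Type) (P : Ix -> B -> Prop),
    is_partition J P /\ uniform P /\
    (exists k, forall x, P k x <-> I x) /\ P_decomposable (@r_brace B) P.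
Proof.
  pose proof L as [[HJ0 [HJadd [HJopp _]]] [[Hsub [HI0 [HIadd [HIopp _]]]] _]].
  exists (Idx J I), (fun k => proj1_sig k).
  split; [|split; [|split]].
  - split; [|split; [|split]].
    + intros [S [a [Ja ->]]]. exists a. simpl. split; [exact Ja|].
      rewrite addNl. exact HI0.
    + intros [S [a [Ja ->]]] x. simpl. intros [Jx _]. exact Jx.
    + intros x Jx. exists (exist _ (coset J I x) (ex_intro _ x (conj Jx eq_refl))).
      simpl. split; [exact Jx|]. rewrite addNl. exact HI0.
    + intros [S [a [Ja ->]]] [T [b [Jb ->]]] x. simpl. intros [Jx Hx] [_ Hy].
      apply subset_eq_compat. apply functional_extensionality. intro y.
      apply propositional_extensionality. unfold coset.
      assert (Hab : EE I a b).
      { eapply E_trans; [exact L | exact Hx | apply (E_sym L); exact Hy]. }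
      split; intros [Jy Hy']; split; auto.
      * eapply E_trans; [exact L | apply (E_sym L); exact Hab | exact Hy'].
      * eapply E_trans; [exact L | exact Hab | exact Hy'].
  - intros [S [a [Ja ->]]] [T [b [Jb ->]]]. simpl. apply (equip_coset L); assumption.
  - exists (exist _ (coset J I zero) (ex_intro _ zero (conj HJ0 eq_refl))).
    intro x. simpl. unfold coset. rewrite g_opp0, add0l. split.
    + intros [_ H]; exact H.
    + intro H. split; auto.
  - intros [S [a [Ja ->]]] [T [b [Jb ->]]] q. simpl. apply (decomp_cosets L).
Qed.

Theorem theoremC (B : skew_brace) :
  soluble B -> uniformly_multidecomposable (@r_brace B).
Proof.
  intros [n [I [H0 [Hn Hstep]]]].
  assert (Hcl : forall i, i < n -> closedJ (I i)).
  { intros [|m] Hm.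
    - repeat split; intros; apply H0.
    - destruct (Hstep m ltac:(lia)) as [[_ [Hz [Ha [Ho [_ [Hm' [Hi _]]]]]]] _].
      repeat split; auto. }
  exists n, I. split; [exact H0|]. split; [|split].
  - intros i Hi x Hx. destruct (Hstep i Hi) as [[Hsub _] _]. auto.
  - exists zero. exact Hn.
  - intros i Hi. destruct (Hstep i Hi) as [Hid Hqa].
    apply level_step. split; [apply Hcl; exact Hi | split; assumption].
Qed.
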